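(* Let $n_1,\dots,n_m$ be positive integers, $n=n_1+\cdots+n_m$, let $\tau$ be a smooth $k$-representation of $M'=M'_{n_1,\dots,n_m}$, let $\rho$ be a subquotient of $\tau$, and let $\theta$ be a non-degenerate character of $U=U_{n_1}\times\cdots\times U_{n_m}$. If $\rho^{(n)}_\theta\neq0$, then $\tau^{(n)}_\theta\neq0$.
   Context: $F$ is a non-archimedean locally compact field of residual characteristic $p$, $k$ an algebraically closed field of characteristic $\ell\neq p$. $M_{n_1,\dots,n_m}=\mathrm{GL}_{n_1}(F)\times\cdots\times\mathrm{GL}_{n_m}(F)$ embedded block-diagonally in $\mathrm{GL}_n(F)$, and $M'_{n_1,\dots,n_m}=M_{n_1,\dots,n_m}\cap\mathrm{SL}_n(F)$. $U_{n_i}$ is the upper unitriangular subgroup of $\mathrm{GL}_{n_i}(F)$; $\theta:U\to k^\times$ is a smooth character trivial on $[U,U]$ and nontrivial on each simple root subgroup. Derivative: for $1\le s\le m$ and $2\le j\le n_s$ let $N_{s,j}\subset U$ be the subgroup of elements equal to the identity in all blocks except block $s$, where the entry is an upper unitriangular matrix whose only possibly nonzero off-diagonal entries lie in column $j$, rows $1,\dots,j-1$. List these as $N_{m,n_m},\dots,N_{m,2},N_{m-1,n_{m-1}},\dots,N_{1,2}$. For a representation on a space $E$, put $E_0=E$ and let $E_t$ be the quotient of $E_{t-1}$ by the span of $ga-\theta(g)a$, $g$ in the $t$-th group of the list, $a\in E_{t-1}$. The final quotient is the $n$-th derivative, denoted $(\cdot)^{(n)}_\theta$ (written $(\cdot)^{(n_1+\cdots+n_m)}_{\theta,m}$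 in the paper). *)

(* Defs.v *)
From HB Require Import structures.
From mathcomp Require Import all_boot all_order all_algebra.
From mathcomp Require Import reals.
Set Implicit Arguments. Unset Strict Implicit. Unset Printing Implicit Defensive.
Import Order.TTheory GRing.Theory Num.Theory.
Local Open Scope ring_scope.

(* [v] is an absolute value on F; F is a non-archimedean, non-discrete-trivial,
   locally compact valued field (local compactness <-> the closed unit ball
   O = {v x <= 1} is (sequentially) compact for the metric v(x-y)), whose
   residue field O/{v x < 1} has characteristic p (i.e. v p < 1, p prime). *)
Definition nonarch_local_field (R : realType) (F : fieldType) (v : F -> R)
    (p : nat) : Prop :=
  [/\ v 0 = 0,
      (forall x, x != 0 -> 0 < v x),
      (forall x y, v (x * y) = v x * v y),
      (forall x y, v (x + y) <= Num.max (v x) (v y)) /\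
      (exists x, 0 < v x < 1) /\
      (forall u : nat -> F, (forall t, v (u t) <= 1) ->
         exists (phi : nat -> nat) (x : F),
           (forall t, (phi t < phi t.+1)%N) /\ v x <= 1 /\
           (forall eps : R, 0 < eps -> exists K, forall t, (K <= t)%N ->
              v (u (phi t) - x) < eps))
    & prime p /\ v (p%:R) < 1].

(* blocks are indexed 0 .. m-1 (paper: 1 .. m); off s = n_1 + ... + n_s *)
Definition off (ns : seq nat) (s : nat) : nat := sumn (take s ns).
(* index of the block containing the (0-indexed) row/column i *)
Definition blk (ns : seq nat) (i : nat) : nat :=
  size [seq s <- iota 0 (size ns) | (off ns s.+1 <= i)%N].

Section Groups.
Variables (F : fieldType) (ns : seq nat).
Local Notation n := (sumn ns).

Definition blockdiag (g : 'M[F]_n) : Prop :=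
  forall i j : 'I_n, blk ns i != blk ns j -> g i j = 0.

Definition Mprime (g : 'M[F]_n) : Prop := blockdiag g /\ \det g = 1.

Definition Ugrp (g : 'M[F]_n) : Prop :=
  blockdiag g /\ (forall i : 'I_n, g i i = 1) /\
  (forall i j : 'I_n, (j < i)%N -> g i j = 0).

(* N_{s,c}: block s (0-indexed), local column c (0-indexed, paper: j = c+1) *)
Definition Ngrp (s c : nat) (g : 'M[F]_n) : Prop :=
  (forall i : 'I_n, g i i = 1) /\
  (forall i j : 'I_n, i != j -> g i j != 0 ->
     [/\ val j = (off ns s + c)%N, (off ns s <= i)%N & (i < j)%N]).

(* the ordered list N_{m,n_m}, ..., N_{m,2}, N_{m-1,n_{m-1}}, ..., N_{1,2} *)
Definition Nlist : seq (nat * nat) :=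
  flatten [seq [seq (s, c) | c <- rev (iota 1 (nth 0%N ns s).-1)]
          | s <- rev (iota 0 (size ns))].

Definition root_elt (a : nat) (x : F) : 'M[F]_n :=
  \matrix_(i, j) ((i == j :> nat)%:R + (if ((i == a :> nat) && (j == a.+1 :> nat))
                                       then x else 0)).
End Groups.

Definition near1 (R : realType) (F : fieldType) (v : F -> R) (m : nat)
    (eps : R) (g : 'M[F]_m) : Prop :=
  forall i j : 'I_m, v (g i j - (i == j)%:R) < eps.

Definition smooth_rep (R : realType) (F : fieldType) (v : F -> R) (m : nat)
    (k : fieldType) (E : lmodType k) (G : 'M[F]_m -> Prop)
    (pi : 'M[F]_m -> E -> E) : Prop :=
  [/\ (forall g a (x y : E), pi g (a *: x + y) = a *: pi g x + pi g y),
      (forall x, pi 1%:M x = x),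
      (forall g h x, G g -> G h -> pi (g *m h) x = pi g (pi h x))
    & (forall x, exists2 eps : R, 0 < eps &
         forall g, G g -> near1 v eps g -> pi g x = x)].

(* rho is (isomorphic to) a subquotient W/W' of tau: W a subrepresentation
   and f : W ->> E2 a surjective equivariant linear map (W' = ker f). *)
Definition subquotient (F : fieldType) (m : nat) (k : fieldType)
    (E1 E2 : lmodType k) (G : 'M[F]_m -> Prop)
    (tau : 'M[F]_m -> E1 -> E1) (rho : 'M[F]_m -> E2 -> E2) : Prop :=
  exists (W : E1 -> Prop) (f : E1 -> E2),
    [/\ W 0, (forall a x y, W x -> W y -> W (a *: x + y)),
        (forall g x, G g -> W x -> W (tau g x)),
        (forall a x y, f (a *: x + y) = a *: f x + f y) /\
        (forall g x, G g -> W x -> f (tau g x) = rho g (f x))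
      & (forall y, exists2 x, W x & f x = y)].

Definition nondeg_char (R : realType) (F : fieldType) (v : F -> R)
    (ns : seq nat) (k : fieldType) (theta : 'M[F]_(sumn ns) -> k) : Prop :=
  [/\ (forall g, Ugrp g -> theta g != 0),
      (forall g h, Ugrp g -> Ugrp h -> theta (g *m h) = theta g * theta h),
      (forall g h, Ugrp g -> Ugrp h -> g \in unitmx -> h \in unitmx ->
         theta (g *m h *m invmx g *m invmx h) = 1) /\
      (exists2 eps : R, 0 < eps &
         forall g, Ugrp g -> near1 v eps g -> theta g = 1)
    & (forall s c, (s < size ns)%N -> (1 <= c < nth 0%N ns s)%N ->
         exists x, theta (@root_elt F ns (off ns s + c).-1 x) != 1)].

Inductive gen_span (k : fieldType) (E : lmodType k) (P : E -> Prop) : E -> Prop :=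
| gs_zero : gen_span P 0
| gs_base x : P x -> gen_span P x
| gs_lin a x y : gen_span P x -> gen_span P y -> gen_span P (a *: x + y).

(* Iterated quotient: E_t = E / S_t where S_0 = 0 and S_t is the preimage in E
   of span{g a - theta(g) a : g in N_t, a in E_{t-1}}, i.e.
   S_t = span(S_{t-1} u {pi g a - theta g a : g in N_t, a in E}). *)
Definition deriv_step (F : fieldType) (ns : seq nat) (k : fieldType)
    (E : lmodType k) (pi : 'M[F]_(sumn ns) -> E -> E)
    (theta : 'M[F]_(sumn ns) -> k) (S : E -> Prop) (sc : nat * nat) : E -> Prop :=
  gen_span (fun x => S x \/ exists g a, @Ngrp F ns sc.1 sc.2 g /\
                                       x = pi g a - theta g *: a).

Definition deriv_kernel (F : fieldType) (ns : seq nat) (k : fieldType)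
    (E : lmodType k) (pi : 'M[F]_(sumn ns) -> E -> E)
    (theta : 'M[F]_(sumn ns) -> k) : E -> Prop :=
  foldl (deriv_step pi theta) (fun x => x = 0) (Nlist ns).

(* the n-th derivative E / deriv_kernel is nonzero *)
Definition derivative_nonzero (F : fieldType) (ns : seq nat) (k : fieldType)
    (E : lmodType k) (pi : 'M[F]_(sumn ns) -> E -> E)
    (theta : 'M[F]_(sumn ns) -> k) : Prop :=
  exists x : E, ~ deriv_kernel pi theta x.

(* Main.v *)
Require Import Defs.
From HB Require Import structures.
From mathcomp Require Import all_boot all_order all_algebra.
From mathcomp Require Import reals.
From mathcomp Require Import zify ring lra.
Set Implicit Arguments. Unset Strict Implicit. Unset Printing Implicit Defensive.
Import Order.TTheory GRing.Theory Num.Theory.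
Local Open Scope ring_scope.

Section Lin.
Variables (k : fieldType) (E E' : lmodType k).
Definition islin (f : E -> E') := forall a x y, f (a *: x + y) = a *: f x + f y.
Variable f : E -> E'.
Hypothesis hf : islin f.
Lemma lin0 : f 0 = 0.
Proof.
have h := hf 1 0 0; rewrite !scale1r addr0 in h.
have h2 : f 0 + f 0 = f 0 + 0 by rewrite -h addr0.
exact: addrI h2.
Qed.
Lemma linZ a x : f (a *: x) = a *: f x.
Proof. by have := hf a x 0; rewrite !addr0 lin0 addr0. Qed.
Lemma linD x y : f (x + y) = f x + f y.
Proof. by have := hf 1 x y; rewrite !scale1r. Qed.
Lemma linN x : f (- x) = - f x.
Proof. by rewrite -scaleN1r linZ scaleN1r. Qed.
Lemma linB x y : f (x - y) = f x - f y.
Proof. by rewrite linD linN. Qed.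
Lemma linS I (r : seq I) (F : I -> E) : f (\sum_(i <- r) F i) = \sum_(i <- r) f (F i).
Proof.
elim: r => [|a r IH]; first by rewrite !big_nil lin0.
by rewrite !big_cons linD IH.
Qed.
End Lin.

Section Span.
Variables (k : fieldType) (E : lmodType k).
Definition closedP (S : E -> Prop) := S 0 /\ forall a x y, S x -> S y -> S (a *: x + y).
Lemma gen_closed (P : E -> Prop) : closedP (gen_span P).
Proof. split; [exact: gs_zero | move=> a x y; exact: gs_lin]. Qed.
Variable S : E -> Prop.
Hypothesis hS : closedP S.
Lemma clZ a x : S x -> S (a *: x).
Proof. by move=> h; have := hS.2 a x 0 h hS.1; rewrite addr0. Qed.
Lemma clD x y : S x -> S y -> S (x + y).
Proof. by move=> h1 h2; have := hS.2 1 x y h1 h2; rewrite scale1r. Qed.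
Lemma clN x : S x -> S (- x).
Proof. by move=> h; rewrite -scaleN1r; apply: clZ. Qed.
Lemma clB x y : S x -> S y -> S (x - y).
Proof. by move=> h1 h2; apply: clD => //; apply: clN. Qed.
Lemma clS I (r : seq I) (F : I -> E) : (forall i, S (F i)) -> S (\sum_(i <- r) F i).
Proof.
move=> h; elim: r => [|a r IH]; first by rewrite big_nil; exact: hS.1.
by rewrite big_cons; apply: clD.
Qed.
End Span.

Lemma small_pow (R : realType) (q B eps : R) : 0 <= q -> q < 1 -> 0 <= B -> 0 < eps ->
  exists N, q ^+ N * B < eps.
Proof.
case: (eqVneq q 0) => [->|qn0] q0 q1 B0 e0; first by exists 1%N; rewrite expr1 mul0r.
have qp : 0 < q by rewrite lt_def qn0 q0.
pose h := q^-1 - 1.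
have h0 : 0 < h by rewrite /h subr_gt0 invf_gt1.
have bern : forall N : nat, 1 + N%:R * h <= (1 + h) ^+ N.
  elim => [|N IH]; first by rewrite expr0 mul0r addr0.
  rewrite exprS -natr1.
  have hN : 0 <= (N%:R : R) by rewrite ler0n.
  nra.
have X : (1 + h) = q^-1 by rewrite /h addrC subrK.
pose N := Num.bound (B / (h * eps)).
have hb : B / (h * eps) < N%:R by apply: archi_boundP; rewrite divr_ge0 // mulr_ge0 // ltW.
exists N.
have XN := bern N; rewrite X exprVn in XN.
have xp : 0 < q ^+ N by rewrite exprn_gt0.
rewrite mulrC -[q ^+ N]invrK ltr_pdivrMr ?invr_gt0 //.
rewrite ltr_pdivrMr ?mulr_gt0 // in hb.
have hN : 0 <= (N%:R : R) by rewrite ler0n.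
nra.
Qed.

Section Off.
Variable ns : seq nat.
Lemma off_S s : (s < size ns)%N -> off ns s.+1 = (off ns s + nth 0%N ns s)%N.
Proof. by move=> h; rewrite /off (take_nth 0%N h) sumn_rcons. Qed.
Lemma off_le1 s : (off ns s <= off ns s.+1)%N.
Proof.
case: (ltnP s (size ns)) => h; first by rewrite off_S // leq_addr.
by rewrite /off !take_oversize // (leq_trans h).
Qed.
Lemma off_mono s t : (s <= t)%N -> (off ns s <= off ns t)%N.
Proof.
elim: t => [|t IH]; first by rewrite leqn0 => /eqP->.
rewrite leq_eqVlt => /orP[/eqP->//|]; rewrite ltnS => h.
exact: leq_trans (IH h) (off_le1 t).
Qed.
Lemma blk_eq s i : (s < size ns)%N -> (off ns s <= i < off ns s + nth 0%N ns s)%N ->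
  blk ns i = s.
Proof.
move=> hs /andP[h1 h2].
rewrite /blk -(subnKC (ltnW hs)) iotaD filter_cat size_cat !size_filter add0n.
rewrite (@eq_in_count _ _ predT); last first.
  move=> t; rewrite mem_iota add0n => /andP [_ ht] /=.
  exact: leq_trans (off_mono ht) h1.
rewrite count_predT size_iota (@eq_in_count _ _ pred0) ?count_pred0 ?addn0 //.
move=> t; rewrite mem_iota => /andP[ht _] /=; apply/negbTE; rewrite -ltnNge.
apply: leq_trans h2 _; rewrite -off_S //; exact: off_mono.
Qed.
End Off.

Section Mat.
Variables (F : fieldType) (ns : seq nat).
Local Notation n := (sumn ns).
Local Notation MM := ('M[F]_n).

Definition supp (a0 J : nat) (A : MM) := forall i j : 'I_n, A i j != 0 ->
  [/\ val j = J, (a0 <= i)%N & (i < j)%N].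

Lemma supp0 a0 J : supp a0 J 0.
Proof. by move=> i j; rewrite mxE eqxx. Qed.
Lemma suppD a0 J A B : supp a0 J A -> supp a0 J B -> supp a0 J (A + B).
Proof.
move=> hA hB i j; rewrite mxE => nz.
case: (eqVneq (A i j) 0) => [e|]; last exact: hA.
by apply: hB; move: nz; rewrite e add0r.
Qed.
Lemma suppZ a0 J (a : F) A : supp a0 J A -> supp a0 J (a *: A).
Proof.
move=> hA i j; rewrite mxE => nz; apply: hA; move: nz.
by apply: contraNneq => ->; rewrite mulr0.
Qed.

Lemma mul_nz (A B : MM) i k : (A *m B) i k != 0 ->
  exists l, (A i l != 0) /\ (B l k != 0).
Proof.
rewrite mxE => nz.
have : [exists l, (A i l != 0) && (B l k != 0)].
  apply: contraNT nz => /existsPn H; apply/eqP; rewrite big1 // => l _.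
  by have := H l; rewrite negb_and !negbK => /orP[]/eqP->; rewrite ?mul0r ?mulr0.
by case/existsP => l /andP[h1 h2]; exists l.
Qed.

Lemma supp_mul0 a0 Ja b0 Jb A B : supp a0 Ja A -> supp b0 Jb B ->
  ~~ ((b0 <= Ja) && (Ja < Jb))%N -> A *m B = 0.
Proof.
move=> hA hB hn; apply/matrixP => i k; rewrite [RHS]mxE.
apply/eqP; apply: contraNT hn => /mul_nz [l [h1 h2]].
case: (hA _ _ h1) => e1 _ _; case: (hB _ _ h2) => e2 h3 h4.
by rewrite -e1 h3 -e2 h4.
Qed.

Lemma supp_mul a0 Ja b0 Jb A B : supp a0 Ja A -> supp b0 Jb B ->
  (b0 <= a0)%N -> supp b0 Jb (A *m B).
Proof.
move=> hA hB hab i k /mul_nz [l [h1 h2]].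
case: (hA _ _ h1) => e1 h3 h4; case: (hB _ _ h2) => e2 h5 h6.
split => //; first exact: leq_trans hab h3.
exact: ltn_trans h4 h6.
Qed.

Lemma Ngrp_supp s c g : @Ngrp F ns s c g -> supp (off ns s) (off ns s + c) (g - 1%:M).
Proof.
case=> hd ho i j; rewrite !mxE.
case: (eqVneq i j) => [->|ne]; first by rewrite hd mulr1n subrr eqxx.
by rewrite mulr0n subr0; apply: ho.
Qed.

Lemma supp_Ngrp s c A : supp (off ns s) (off ns s + c) A -> @Ngrp F ns s c (1%:M + A).
Proof.
move=> hA; split.
  move=> i; rewrite !mxE eqxx mulr1n.
  case: (eqVneq (A i i) 0) => [->|/hA [_ _]]; first by rewrite addr0.
  by rewrite ltnn.
move=> i j ne; rewrite !mxE (negbTE ne) mulr0n add0r; exact: hA.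
Qed.

Definition validp (sc : nat * nat) :=
  ((sc.1 < size ns) && (sc.2 < nth 0%N ns sc.1))%N.

Lemma supp_diag a0 J A i : supp a0 J A -> A i i = 0.
Proof.
move=> hA; apply/eqP; apply: contraT => /hA [_ _]; by rewrite ltnn.
Qed.

Lemma supp_grp s c A : validp (s, c) -> supp (off ns s) (off ns s + c) A ->
  @Mprime F ns (1%:M + A) /\ @Ugrp F ns (1%:M + A).
Proof.
case/andP => /= hs hc hA.
have bd : @blockdiag F ns (1%:M + A).
  move=> i j; apply: contraNeq; rewrite !mxE.
  case: (eqVneq i j) => [->|ne]; first by rewrite eqxx.
  rewrite mulr0n add0r => /hA [e h1 h2].
  rewrite (@blk_eq ns s i) // ?(@blk_eq ns s j) //.
    by rewrite e leq_addr /= ltn_add2l.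
  by rewrite h1 /=; apply: (leq_trans h2); rewrite e leq_add2l ltnW.
have dg : forall i : 'I_n, (1%:M + A) i i = 1.
  by move=> i; rewrite !mxE eqxx (supp_diag i hA) addr0.
split; split => //.
  rewrite -det_tr det_trig; first by rewrite big1 // => i _; rewrite mxE dg.
  apply/is_trig_mxP => i j lt; rewrite !mxE.
  have ne : (j == i) = false by apply/negbTE; rewrite neq_ltn lt orbT.
  rewrite ne mulr0n add0r; apply/eqP; apply: contraT => /hA [_ _].
  by rewrite ltnNge ltnW.
split => // i j lt; rewrite !mxE.
have ne : (i == j) = false by apply/negbTE; rewrite neq_ltn lt orbT.
rewrite ne mulr0n add0r; apply/eqP; apply: contraT => /hA [_ _].
by rewrite ltnNge ltnW.
Qed.
End Mat.

Section NatPart.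
Local Open Scope nat_scope.

Definition lexr : rel (nat * nat) := fun w z =>
  (z.1 < w.1) || ((z.1 == w.1) && (z.2 < w.2)).

Lemma pw_gt_rev m : pairwise (fun a b : nat => b < a) (rev (iota 0 m)).
Proof.
rewrite -sorted_pairwise; last by move=> x y z /= h1 h2; exact: ltn_trans h2 h1.
rewrite rev_sorted; exact: iota_ltn_sorted.
Qed.

Lemma Nlist_pairwise ns : pairwise lexr (Nlist ns).
Proof.
rewrite /Nlist; move: (pw_gt_rev (size ns)).
elim: (rev (iota 0 (size ns))) => [|s0 S IH] //=.
case/andP => hall hS; rewrite pairwise_cat (IH hS) andbT; apply/andP; split.
  apply/allrelP => w z /mapP [c _ ->] /flatten_mapP [s' hs' /mapP [c' _ ->]].
  by rewrite /lexr /= (allP hall _ hs').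
rewrite pairwise_map.
rewrite -sorted_pairwise; last by move=> x y z; rewrite /lexr /= eqxx /= => h1 h2; lia.
rewrite rev_sorted; apply: (sub_sorted _ (iota_ltn_sorted _ _)).
by move=> x y /= h; rewrite /lexr /= eqxx ltnn h.
Qed.

Lemma Nlist_valid ns : all (validp ns) (Nlist ns).
Proof.
apply/allP => w /flatten_mapP [s hs /mapP [c hc ->]].
move: hs hc; rewrite !mem_rev !mem_iota /validp /= => hs hc.
apply/andP; split; lia.
Qed.

Lemma lexr_cond ns w z : validp ns w -> validp ns z -> lexr w z ->
  ((off ns z.1 + z.2 < off ns w.1 + w.2) &&
   ((off ns z.1 + z.2 < off ns w.1) || (off ns w.1 <= off ns z.1)))%N.
Proof.
case: w z => [s c] [s' c']; rewrite /validp /lexr /= => /andP[h1 h2] /andP[h3 h4].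
case/orP => [lt | /andP[/eqP e lt]]; last by subst; rewrite ltn_add2l lt leqnn orbT.
have h : (off ns s' + c' < off ns s)%N.
  apply: (leq_trans _ (off_mono ns lt)); rewrite off_S // ltn_add2l //.
by rewrite h (leq_trans h) ?leq_addr.
Qed.

End NatPart.

Section LinC.
Variables (k : fieldType) (E E' E'' : lmodType k).
Lemma islin_sum I (r : seq I) (G : I -> E -> E') :
  (forall i, islin (G i)) -> islin (fun y => \sum_(i <- r) G i y).
Proof.
move=> h a x y; rewrite scaler_sumr -big_split /=; apply: eq_bigr => i _; exact: h.
Qed.
Lemma islin_scale (c : k) (G : E -> E') : islin G -> islin (fun y => c *: G y).
Proof. by move=> h a x y; rewrite h scalerDr !scalerA mulrC. Qed.
End LinC.


Fixpoint allN (T : Type) (P : T -> Prop) (L : seq T) : Prop :=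
  match L with [::] => True | q :: L' => P q /\ allN P L' end.
Lemma allN_cat T (P : T -> Prop) L1 L2 : allN P L1 -> allN P L2 -> allN P (L1 ++ L2).
Proof. by elim: L1 => //= q L IH [h1 h2] h3; split => //; apply: IH. Qed.
Lemma allN_map T T' (P : T' -> Prop) (g : T -> T') L : (forall q, P (g q)) -> allN P (map g L).
Proof. by move=> h; elim: L => //= q L IH; split. Qed.

Section Core.
Variables (R : realType) (F : fieldType) (v : F -> R) (p : nat) (ns : seq nat)
  (k : fieldType) (E1 E2 : lmodType k)
  (tau : 'M[F]_(sumn ns) -> E1 -> E1) (rho : 'M[F]_(sumn ns) -> E2 -> E2)
  (theta : 'M[F]_(sumn ns) -> k) (W : E1 -> Prop) (f : E1 -> E2).
Local Notation n := (sumn ns).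
Local Notation MM := ('M[F]_n).
Local Notation Mp := (@Mprime F ns).
Local Notation Ug := (@Ugrp F ns).
Hypotheses (Htl : forall g, islin (tau g)) (Hrl : forall g, islin (rho g))
  (Ht1 : forall x, tau 1%:M x = x)
  (Htc : forall g h x, Mp g -> Mp h -> tau (g *m h) x = tau g (tau h x))
  (Hts : forall x, exists2 eps : R, 0 < eps & forall g, Mp g -> near1 v eps g -> tau g x = x)
  (Hth0 : forall g, Ug g -> theta g != 0)
  (Hthm : forall g h, Ug g -> Ug h -> theta (g *m h) = theta g * theta h)
  (Hths : exists2 eps : R, 0 < eps & forall g, Ug g -> near1 v eps g -> theta g = 1)
  (HW : closedP W) (HWt : forall g x, Mp g -> W x -> W (tau g x))
  (Hfl : islin f) (Hfe : forall g x, Mp g -> W x -> f (tau g x) = rho g (f x))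
  (Hv0 : v 0 = 0) (Hvp : forall x, x != 0 -> 0 < v x)
  (Hvm : forall x y, v (x * y) = v x * v y) (Hvp1 : v p%:R < 1)
  (Hpk : (p%:R : k) != 0).

Lemma v_ge0 x : 0 <= v x.
Proof. by case: (eqVneq x 0) => [->|/Hvp/ltW]; rewrite ?Hv0. Qed.
Lemma v1 : v 1 = 1.
Proof.
have h : v 1 * v 1 = v 1 * 1 by rewrite -Hvm mulr1 mulr1.
by apply: (mulfI _ h); rewrite gt_eqF // Hvp // oner_neq0.
Qed.
Lemma vX x N : v (x ^+ N) = v x ^+ N.
Proof. by elim: N => [|N IH]; rewrite ?expr0 ?v1 // !exprS Hvm IH. Qed.

Definition pw (A : MM) (j : nat) : MM := 1%:M + j%:R *: A.

Section Z.
Variables (s c : nat).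
Hypothesis (hz : validp ns (s, c)).
Local Notation suppz := (supp (off ns s) (off ns s + c)).

Lemma mul11 A B : suppz A -> suppz B -> (1%:M + A) *m (1%:M + B) = 1%:M + (A + B) :> MM.
Proof.
move=> hA hB; rewrite mulmxDl !mulmxDr !mul1mx mulmx1.
rewrite (supp_mul0 hA hB) ?ltnn ?andbF // addr0.
by rewrite [A + B]addrC addrA.
Qed.
Lemma pwS A j : suppz A -> pw A j *m (1%:M + A) = pw A j.+1.
Proof.
move=> hA; rewrite /pw mul11 //; last exact: suppZ.
by rewrite -natr1 scalerDl scale1r.
Qed.
Lemma pw0 A : pw A 0 = 1%:M.
Proof. by rewrite /pw scale0r addr0. Qed.
Lemma grp A : suppz A -> Mp (1%:M + A) /\ Ug (1%:M + A).
Proof. exact: supp_grp. Qed.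
Lemma pw_grp A j : suppz A -> Mp (pw A j) /\ Ug (pw A j).
Proof. by move=> hA; apply: grp; apply: suppZ. Qed.
Lemma one_grp : Mp 1%:M /\ Ug 1%:M.
Proof. by have := @grp 0 (@supp0 F ns _ _); rewrite addr0. Qed.
Lemma theta1 : theta 1%:M = 1.
Proof.
have [_ u] := one_grp.
have h : theta 1%:M * theta 1%:M = theta 1%:M * 1 by rewrite -Hthm // mul1mx mulr1.
exact: (mulfI (Hth0 u) h).
Qed.

Lemma choose_M A b : suppz A -> exists M : nat,
  [/\ (M%:R : k) != 0, tau (pw A M) b = b & theta (pw A M) = 1].
Proof.
move=> hA.
case: (Hts b) => e1 e1p H1; case: Hths => e2 e2p H2.
pose B := \sum_i \sum_j v (A i j).
have B0 : 0 <= B by apply: sumr_ge0 => i _; apply: sumr_ge0 => j _; exact: v_ge0.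
have eps0 : 0 < Num.min e1 e2 by rewrite lt_min e1p e2p.
have [N hN] := small_pow (v_ge0 p%:R) Hvp1 B0 eps0.
exists (p ^ N)%N.
have nr : near1 v (Num.min e1 e2) (pw A (p ^ N)).
  move=> i j; rewrite /pw !mxE.
  have -> : (i == j)%:R + (p ^ N)%:R * A i j - (i == j)%:R = (p ^ N)%:R * A i j.
    by rewrite addrC addKr.
  rewrite Hvm natrX vX; apply: le_lt_trans hN; apply: ler_wpM2l.
    by rewrite exprn_ge0 // v_ge0.
  rewrite /B (bigD1 i) //= (bigD1 j) //= -addrA lerDl.
  rewrite addr_ge0 // sumr_ge0 // => *; rewrite ?sumr_ge0 // => *; exact: v_ge0.
have [m1 u1] := pw_grp (p ^ N) hA.
split; first by rewrite natrX expf_neq0.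
  apply: H1 => // i j; have := nr i j; rewrite lt_min; by case/andP.
apply: H2 => // i j; have := nr i j; rewrite lt_min; by case/andP.
Qed.

Definition avg (M : nat) (A : MM) (y : E1) : E1 :=
  (M%:R)^-1 *: \sum_(0 <= j < M) (theta (pw A j))^-1 *: tau (pw A j) y.

Lemma avg_lin M A : islin (avg M A).
Proof.
apply: islin_scale; apply: islin_sum => j; apply: islin_scale; exact: Htl.
Qed.

Lemma thetaS A j : suppz A -> theta (pw A j.+1) = theta (pw A j) * theta (1%:M + A).
Proof.
move=> hA; rewrite -(pwS j hA) Hthm //; [exact: (pw_grp j hA).2 | exact: (grp hA).2].
Qed.

Lemma avg_kill M A b : suppz A -> tau (pw A M) b = b -> theta (pw A M) = 1 ->
  avg M A (tau (1%:M + A) b - theta (1%:M + A) *: b) = 0.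
Proof.
move=> hA htM hthM.
pose G j := (theta (pw A j))^-1 *: tau (pw A j) b.
have [mg ug] := grp hA.
rewrite /avg (eq_bigr (fun j => theta (1%:M + A) *: (G j.+1 - G j))); last first.
  move=> j _; have [mj uj] := pw_grp j hA.
  rewrite linB // linZ // -Htc // pwS // /G thetaS // scalerBr !scalerA.
  rewrite scalerBr !scalerA invfM mulrCA mulfV ?mulr1 ?Hth0 // [_ * theta (1%:M + A)]mulrC.
  by []. rewrite -scaler_sumr telescope_sumr // /G htM hthM pw0 Ht1 theta1 invr1 scale1r.
by rewrite subrr !scaler0.
Qed.

Lemma avg_W M A y : suppz A -> W y -> W (avg M A y).
Proof.
move=> hA hy; apply: (clZ HW); apply: (clS HW) => j; apply: (clZ HW).
by apply: HWt => //; exact: (pw_grp j hA).1.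
Qed.

Lemma avg_comm M A A' y : suppz A -> suppz A' ->
  avg M A (tau (1%:M + A') y) = tau (1%:M + A') (avg M A y).
Proof.
move=> hA hA'; have [m' _] := grp hA'.
rewrite /avg (linZ (Htl _)) (linS (Htl _)); congr (_ *: _); apply: eq_bigr => j _.
have [mj _] := pw_grp j hA.
rewrite linZ // -!Htc //; congr (_ *: tau _ _).
rewrite /pw mul11 //; last exact: suppZ.
rewrite mul11 //; last exact: suppZ.
by rewrite [A' + _]addrC.
Qed.

Lemma avg_gen M A A' y : suppz A -> suppz A' ->
  avg M A (tau (1%:M + A') y - theta (1%:M + A') *: y) =
  tau (1%:M + A') (avg M A y) - theta (1%:M + A') *: avg M A y.
Proof.
move=> hA hA'.
rewrite (linB (avg_lin M A)) (linZ (avg_lin M A)) avg_comm //.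
Qed.

Lemma f_avg M A y (S : E2 -> Prop) : suppz A -> closedP S ->
  (forall g x, @Ngrp F ns s c g -> S (rho g x - theta g *: x)) ->
  (M%:R : k) != 0 -> W y -> S (f y - f (avg M A y)).
Proof.
move=> hA hS hgen hM hy.
have -> : f y = (M%:R)^-1 *: \sum_(0 <= j < M) f y.
  by rewrite sumr_const_nat subn0 -scaler_nat scalerA mulVf // scale1r.
rewrite /avg (linZ Hfl) (linS Hfl) -scalerBr -sumrB.
apply: (clZ hS); apply: (clS hS) => j.
have [mj uj] := pw_grp j hA.
rewrite linZ // Hfe //.
have -> : f y - (theta (pw A j))^-1 *: rho (pw A j) (f y) =
  (- (theta (pw A j))^-1) *: (rho (pw A j) (f y) - theta (pw A j) *: f y).
  rewrite scalerBr scalerA mulNr mulVf ?Hth0 // scaleNr scaleN1r opprK addrC //.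
apply: (clZ hS); apply: hgen; apply: supp_Ngrp; exact: suppZ.
Qed.
End Z.

Lemma gs_pres (E : lmodType k) (P : E -> Prop) (T : E -> E) : islin T ->
  (forall x, P x -> gen_span P (T x)) -> forall x, gen_span P x -> gen_span P (T x).
Proof.
move=> hT hP x; elim => [|y /hP //|a y z _ h1 _ h2].
  by rewrite (lin0 hT); exact: gs_zero.
by rewrite hT; exact: gs_lin.
Qed.

Local Notation Kt l := (foldl (deriv_step tau theta) (fun x => x = 0) l).
Local Notation Kr l := (foldl (deriv_step rho theta) (fun x => x = 0) l).

Lemma norm_pres s c A l : validp ns (s, c) -> supp (off ns s) (off ns s + c) A ->
  all (validp ns) l -> all (fun w => lexr w (s, c)) l ->
  forall x, Kt l x -> Kt l (tau (1%:M + A) x).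
Proof.
move=> hz hA; elim/last_ind: l => [|l w IH].
  by move=> _ _ x /= ->; rewrite (lin0 (Htl _)).
rewrite !all_rcons => /andP[vw vl] /andP[lw ll] x; rewrite !foldl_rcons.
apply: gs_pres; first exact: Htl.
move=> y [hy | [g [a [hg ->]]]]; first by apply: gs_base; left; apply: IH.
case: w vw lw hg => s' c' vw lw hg.
have [B hB eg] : exists2 B, supp (off ns s') (off ns s' + c') B & g = 1%:M + B.
  by exists (g - 1%:M); [exact: Ngrp_supp | rewrite addrC subrK].
have := lexr_cond vw hz lw => /= /andP[lt hor].
have BA : B *m A = 0 by apply: (supp_mul0 hB hA); rewrite negb_and -leqNgt (ltnW lt) orbT.
pose C := B + A *m B.
have hC : supp (off ns s') (off ns s' + c') C.
  case/orP: hor => h.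
    rewrite /C (supp_mul0 hA hB) ?addr0 //; by rewrite negb_and -ltnNge h.
  by apply: suppD => //; apply: supp_mul hA hB h.
have key : (1%:M + C) *m (1%:M + A) = (1%:M + A) *m (1%:M + B).
  rewrite !mulmxDl !mul1mx !mulmxDr !mulmx1 BA -mulmxA BA mulmx0 !addr0.
  rewrite -!addrA; congr (_ + _); rewrite !addrA; congr (_ + _); exact: addrC.
have [mA uA] := grp hz hA.
have [mB uB] := grp vw hB.
have [mC uC] := grp vw hC.
have thC : theta (1%:M + C) = theta g.
  have := congr1 theta key; rewrite !Hthm // eg [theta (1%:M + A) * _]mulrC.
  move=> h; exact: (mulIf (Hth0 uA) h).
apply: gs_base; right; exists (1%:M + C), (tau (1%:M + A) a); split.
  exact: supp_Ngrp.
rewrite (linB (Htl _)) (linZ (Htl _)) thC; congr (_ - _).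
by rewrite eg -Htc // -Htc // key.
Qed.

Lemma fold_closed (E : lmodType k) (pi : MM -> E -> E) l (S : E -> Prop) :
  closedP S -> closedP (foldl (deriv_step pi theta) S l).
Proof. elim: l S => [|z l IH] S hS //=; apply: IH; exact: gen_closed. Qed.
Lemma init_closed (E : lmodType k) : closedP (fun x : E => x = 0).
Proof. by split => // a x y -> ->; rewrite scaler0 addr0. Qed.

Lemma rep (S : E1 -> Prop) s c x : closedP S -> deriv_step tau theta S (s, c) x ->
  exists s0 L, [/\ S s0, allN (fun q => @Ngrp F ns s c q.1) L &
     x = s0 + \sum_(q <- L) (tau q.1 q.2 - theta q.1 *: q.2)].
Proof.
move=> hS; elim.
- by exists 0, [::]; split => //; [exact: hS.1 | rewrite big_nil addr0].
- move=> y [hy | [g [a [hg ->]]]].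
    by exists y, [::]; split => //; rewrite big_nil addr0.
  by exists 0, [:: (g, a)]; split => //; [exact: hS.1 | rewrite big_seq1 add0r].
- move=> a y z _ [s1 [L1 [h1 h1L ->]]] _ [s2 [L2 [h2 h2L ->]]].
  exists (a *: s1 + s2), ([seq (q.1, a *: q.2) | q <- L1] ++ L2); split.
  + exact: hS.2.
  + apply: allN_cat => //; move: h1L; elim: L1 => //= q L IH [hq hL]; split => //; exact: IH.
  + rewrite big_cat big_map /= scalerDr scaler_sumr.
    have -> : \sum_(j <- L1) (tau (j.1, a *: j.2).1 (j.1, a *: j.2).2 -
          theta (j.1, a *: j.2).1 *: (j.1, a *: j.2).2) =
        \sum_(j <- L1) a *: (tau j.1 j.2 - theta j.1 *: j.2).
      apply: eq_bigr => q _ /=.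
      by rewrite (linZ (Htl _)) scalerBr !scalerA mulrC.
    by rewrite addrACA.
Qed.

Lemma core l s c : validp ns (s, c) -> all (validp ns) l -> all (fun w => lexr w (s, c)) l ->
  (forall x, W x -> Kt l x -> Kr l (f x)) ->
  forall L x s0, W x -> Kt l s0 -> allN (fun q => @Ngrp F ns s c q.1) L ->
  x = s0 + \sum_(q <- L) (tau q.1 q.2 - theta q.1 *: q.2) ->
  deriv_step rho theta (Kr l) (s, c) (f x).
Proof.
move=> hz vl ll IH L0.
have [N hN] : exists N, size L0 = N by exists (size L0).
elim: N L0 hN => [|N IHN] [|[g b] L] //= hN x s0 hx hs0 hL ex.
  rewrite big_nil addr0 in ex; subst x; apply: gs_base; left; exact: IH.
case: hL => hg hL.
have [A hA eg] : exists2 A, supp (off ns s) (off ns s + c) A & g = 1%:M + A.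
  by exists (g - 1%:M); [exact: Ngrp_supp | rewrite addrC subrK].
have [M [hM htM hthM]] := choose_M hz b hA.
have hKl := fold_closed tau l (@init_closed E1).
have hSc := gen_closed (fun x0 => Kr l x0 \/ exists g0 a0,
  @Ngrp F ns s c g0 /\ x0 = rho g0 a0 - theta g0 *: a0).
have -> : f x = f (avg M A x) + (f x - f (avg M A x)) by rewrite addrC subrK.
apply: (clD hSc); last first.
  apply: (f_avg hz) => // g0 x0 hg0; apply: gs_base; right; exists g0, x0; split => //.
have hsum : forall L0, allN (fun q => @Ngrp F ns s c q.1) L0 ->
    avg M A (\sum_(q <- L0) (tau q.1 q.2 - theta q.1 *: q.2)) =
    \sum_(q <- [seq (q.1, avg M A q.2) | q <- L0]) (tau q.1 q.2 - theta q.1 *: q.2).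
  elim => [|q L0 IH0] /=; first by rewrite !big_nil (lin0 (avg_lin M A)).
  case=> hq hL0; rewrite !big_cons (linD (avg_lin M A)) IH0 //; congr (_ + _) => /=.
  have [A' hA' eq'] : exists2 A', supp (off ns s) (off ns s + c) A' & q.1 = 1%:M + A'.
    by exists (q.1 - 1%:M); [exact: Ngrp_supp | rewrite addrC subrK].
  by rewrite eq' (avg_gen hz).
apply: (IHN [seq (q.1, avg M A q.2) | q <- L] _ (avg M A x) (avg M A s0)).
- by rewrite size_map; case: hN.
- exact: (avg_W hz _ hA hx).
- apply: (clZ hKl); apply: (clS hKl) => j; apply: (clZ hKl).
  apply: (norm_pres hz _ vl ll) => //; exact: suppZ.
- by elim: L hL {IHN hN ex hsum} => //= q L' IH' [h1 h2]; split => //; apply: IH'.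
- rewrite ex (linD (avg_lin M A)) big_cons (linD (avg_lin M A)) hsum // eg.
  by rewrite /= (avg_kill hz) // add0r.
Qed.

Lemma main_list l : all (validp ns) l -> pairwise lexr l ->
  forall x, W x -> Kt l x -> Kr l (f x).
Proof.
elim/last_ind: l => [|l [s c] IH].
  by move=> _ _ x _ /= ->; rewrite (lin0 Hfl).
rewrite all_rcons pairwise_rcons => /andP[vz vl] /andP[ll pl] x hx.
rewrite !foldl_rcons => /rep [|s0 [L [hs0 hL ex]]].
  exact: fold_closed (@init_closed E1).
exact: (core vz vl ll (IH vl pl) hx hs0 hL ex).
Qed.
End Core.

Unset Implicit Arguments.
Theorem proposition4p13 (R : realType) (F : fieldType) (v : F -> R) (p : nat)
    (k : closedFieldType) (ns : seq nat) (E1 E2 : lmodType k)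
    (tau : 'M[F]_(sumn ns) -> E1 -> E1) (rho : 'M[F]_(sumn ns) -> E2 -> E2)
    (theta : 'M[F]_(sumn ns) -> k) :
  nonarch_local_field v p ->
  (p%:R : k) != 0 ->
  all (fun x => (0 < x)%N) ns ->
  smooth_rep v (@Mprime F ns) tau ->
  smooth_rep v (@Mprime F ns) rho ->
  subquotient (@Mprime F ns) tau rho ->
  nondeg_char v theta ->
  derivative_nonzero rho theta ->
  derivative_nonzero tau theta.
Proof.
move=> [Hv0 Hvp Hvm _ [_ Hvp1]] Hpk _ [Htl Ht1 Htc Hts] [Hrl _ _ _].
move=> [W [f [HW0 HWl HWt [Hfl Hfe] Hsurj]]] [Hth0 Hthm [_ Hths] _] [y hy].
have [x hWx ex] := Hsurj y.
exists x => hK; apply: hy; rewrite -ex.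
have HW : closedP W by split.
exact: (@main_list R F v p ns k E1 E2 tau rho theta W f Htl Ht1 Htc Hts Hth0 Hthm
  Hths HW HWt Hfl Hfe Hv0 Hvp Hvm Hvp1 Hpk (Nlist ns) (Nlist_valid ns)
  (Nlist_pairwise ns) x hWx hK).
Qed.
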